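(* Assume Martin's Axiom together with the negation of the Continuum Hypothesis. Let $X$ and $Y$ be nontrivial metrizable spaces. The following are equivalent: (1) $X$ is countable; (2) $Q_p(X,\mathbb{D})$ is metrizable; (3) $Q_p(X,Y)$ is Fr\'{e}chet-Urysohn; (4) $Q_p(X,Y)$ is first countable; (5) $Q_p(X,Y)$ is metrizable; (6) $Q_p(X,Y)$ has countable tightness; (7) $Q_p(X,Y)$ has countable fan-tightness; (8) $Q_p(X,Y)$ has countable strong fan-tightness.
   Context: A function $f:X\to Y$ is quasicontinuous if for every $x\in X$, every open $V\ni f(x)$ and every open $U\ni x$ there is a nonempty open $W\subseteq U$ with $f(W)\subseteq V$. $Q_p(X,Y)$ is the set of all quasicontinuous functions $X\to Y$ with the topology of pointwise convergence; $\mathbb{D}=\{0,1\}$ is the discrete two-point space. Nontrivial means having more than one point. A space $Z$ is Fr\'{e}chet-Urysohn if for every $A\subseteq Z$ and $z\in\overline{A}$ some sequence in $A$ converges to $z$. $Z$ has countable tightness if whenever $z\in\overline{A}$ there is a countable $B\subseteq A$ with $z\in\overline{B}$; countable fan-tightness if for every $z\in Z$ and every sequence $(A_n)_{n\in\omega}$ of subsets with $z\in\bigcap_n\overline{A_n}$ there are finite $K_n\subseteq A_n$ with $z\in\overline{\bigcup_n K_n}$; countable strong fan-tightness if in the same situation there are $a_n\in A_n$ with $z\in\overline{\{a_n:n\in\omega\}}$. *)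

(* Defs.v *)
From HB Require Import structures.
From mathcomp Require Import all_boot all_order all_algebra.
From mathcomp Require Import all_classical all_reals all_analysis.
Set Implicit Arguments. Unset Strict Implicit. Unset Printing Implicit Defensive.
Import Order.TTheory GRing.Theory Num.Theory.
Local Open Scope classical_set_scope.
Local Open Scope ring_scope.
Local Open Scope card_scope.

(* the continuum, as the set of all subsets of nat (infinite binary sequences) *)
Definition continuum_set : set (nat -> bool) := setT.

Definition card_lt_continuum (I : Type) (A : set I) : Prop :=
  (A #<= continuum_set) /\ ~ (continuum_set #<= A).

Section Posets.
Variables (P : Type) (le : P -> P -> Prop).

Definition compatible (p q : P) : Prop := exists r, le r p /\ le r q.

Definition antichain (A : set P) : Prop :=
  forall p q, A p -> A q -> p <> q -> ~ compatible p q.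

Definition ccc : Prop := forall A : set P, antichain A -> countable A.

Definition dense_set (D : set P) : Prop := forall p, exists2 q, D q & le q p.

Definition poset_filter (G : set P) : Prop :=
  G !=set0 /\
  (forall p q, G p -> le p q -> G q) /\
  (forall p q, G p -> G q -> exists2 r, G r & le r p /\ le r q).

Definition partial_order : Prop :=
  (forall p, le p p) /\
  (forall p q r, le p q -> le q r -> le p r) /\
  (forall p q, le p q -> le q p -> p = q).
End Posets.

Definition MartinsAxiom : Prop :=
  forall (P : Type) (le : P -> P -> Prop),
    inhabited P -> partial_order le -> ccc le ->
    forall (I : Type) (D : I -> set P),
      card_lt_continuum [set: I] ->
      (forall i, dense_set le (D i)) ->
      exists G : set P, poset_filter le G /\ forall i, G `&` D i !=set0.

Definition NotCH : Prop :=
  exists A : set (nat -> bool), ~ countable A /\ ~ (continuum_set #<= A).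

Definition nontrivial (T : Type) : Prop := exists x y : T, x <> y.

Definition quasicontinuous (X Y : topologicalType) (f : X -> Y) : Prop :=
  forall (x : X) (V : set Y) (U : set X),
    open V -> V (f x) -> open U -> U x ->
    exists W : set X, [/\ open W, W !=set0, W `<=` U & f @` W `<=` V].

Definition Qp (X Y : topologicalType) : topologicalType :=
  set_type [set f : {ptws X -> Y} | quasicontinuous (f : X -> Y)].

Section TopProps.
Variable T : topologicalType.

Definition metrizable_space (R : realType) : Prop :=
  exists d : T -> T -> R,
    [/\ (forall x y, 0 <= d x y),
        (forall x y, d x y = 0 <-> x = y),
        (forall x y, d x y = d y x),
        (forall x y z, d x z <= d x y + d y z) &
        (forall x : T, nbhs x =
           filter_from [set e : R | 0 < e] (fun e => [set y | d x y < e]))].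

Definition first_countable : Prop :=
  forall x : T, exists B : nat -> set T,
    (forall n, nbhs x (B n)) /\
    (forall U, nbhs x U -> exists n, B n `<=` U).

Definition frechet_urysohn : Prop :=
  forall (A : set T) (z : T), closure A z ->
    exists u : nat -> T, (forall n, A (u n)) /\ u @ \oo --> z.

Definition countable_tightness : Prop :=
  forall (A : set T) (z : T), closure A z ->
    exists B : set T, [/\ B `<=` A, countable B & closure B z].

Definition countable_fan_tightness : Prop :=
  forall (z : T) (A : nat -> set T), (forall n, closure (A n) z) ->
    exists K : nat -> set T,
      (forall n, finite_set (K n) /\ K n `<=` A n) /\
      closure (\bigcup_n K n) z.

Definition countable_strong_fan_tightness : Prop :=
  forall (z : T) (A : nat -> set T), (forall n, closure (A n) z) ->
    exists a : nat -> T, (forall n, A n (a n)) /\ closure (range a) z.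
End TopProps.

(* Main.v *)
Require Import Defs.
From HB Require Import structures.
From mathcomp Require Import all_boot all_order all_algebra.
From mathcomp Require Import all_classical all_reals all_analysis.
From mathcomp Require finmap.
From mathcomp Require Import lra.
Set Implicit Arguments. Unset Strict Implicit. Unset Printing Implicit Defensive.
Import Order.TTheory GRing.Theory Num.Theory.
Local Open Scope classical_set_scope.
Local Open Scope ring_scope.

Module PartA.

Lemma inv_nat_lt (R : realType) (e : R) : 0 < e -> exists n, n.+1%:R^-1 < e.
Proof.
move=> e0; have [N _ H] := near_infty_natSinv_lt (PosNum e0).
by exists N; apply: H => /=.
Qed.

Lemma inv_nat_le (R : realType) (n m : nat) : (n <= m)%N -> m.+1%:R^-1 <= n.+1%:R^-1 :> R.
Proof.
move=> nm; rewrite lef_pV2 ?posrE ?ltr0Sn // ler_nat ltnS //.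
Qed.

Section TopImpl.
Variable T : topologicalType.

Lemma ft_tight : first_countable T -> countable_tightness T.
Proof.
move=> ft A z Az; have [B [Bn Bsub]] := ft z.
have ex n : exists a, A a /\ B n a.
  by have [a [Aa Ba]] := Az _ (Bn n); exists a.
have [a Ha] := choice ex.
exists (range a); split.
- by move=> _ [n _ <-]; case: (Ha n).
- by apply: card_image_le.
- move=> U Uz; have [n BU] := Bsub U Uz.
  by exists (a n); split; [exists n|apply: BU; case: (Ha n)].
Qed.

Lemma fu_tight : frechet_urysohn T -> countable_tightness T.
Proof.
move=> fu A z Az; have [u [Au cu]] := fu A z Az.
exists (range u); split.
- by move=> _ [n _ <-].
- by apply: card_image_le.
- move=> U Uz; have [N _ HN] := cu U Uz.
  by exists (u N); split; [exists N|apply: HN => /=].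
Qed.

Lemma sft_tight : countable_strong_fan_tightness T -> countable_tightness T.
Proof.
move=> sft A z Az; have [a [Aa ca]] := sft z (fun _ => A) (fun _ => Az).
exists (range a); split => //.
- by move=> _ [n _ <-].
- by apply: card_image_le.
Qed.

Lemma fan_tight : countable_fan_tightness T -> countable_tightness T.
Proof.
move=> ft A z Az; have [K [HK cK]] := ft z (fun _ => A) (fun _ => Az).
exists (\bigcup_n K n); split => //.
- by move=> x [n _ Kx]; case: (HK n) => _; apply.
- apply: bigcup_countable => // n _; apply: finite_set_countable; by case: (HK n).
Qed.

Variable R : realType.

Lemma met_nbhsP (d : T -> T -> R) x (B : set T) :
  (nbhs x = filter_from [set e : R | 0 < e] (fun e => [set y | d x y < e])) ->
  nbhs x B <-> exists2 e, 0 < e & [set y | d x y < e] `<=` B.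
Proof. by move=> ->. Qed.

Lemma met_ft : metrizable_space T R -> first_countable T.
Proof.
move=> [d [d0 dP dS dT dN]] x.
exists (fun n => [set y | d x y < n.+1%:R^-1]); split.
  by move=> n; rewrite dN; exists n.+1%:R^-1 => //=; rewrite invr_gt0 ltr0Sn.
move=> U; rewrite dN => -[e /= e0 sub]; have [n ne] := inv_nat_lt e0.
by exists n => y /= dy; apply: sub => /=; apply: lt_trans ne.
Qed.

Lemma met_sft : metrizable_space T R -> countable_strong_fan_tightness T.
Proof.
move=> [d [d0 dP dS dT dN]] z A Az.
have ex n : exists a, A n a /\ d z a < n.+1%:R^-1.
  have [|a [Aa Ba]] := Az n [set y | d z y < n.+1%:R^-1].
    by rewrite dN; exists n.+1%:R^-1 => //=; rewrite invr_gt0 ltr0Sn.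
  by exists a.
have [a Ha] := choice ex.
exists a; split; first by move=> n; case: (Ha n).
move=> U; rewrite dN => -[e /= e0 sub]; have [n ne] := inv_nat_lt e0.
exists (a n); split; first by exists n.
by apply: sub => /=; case: (Ha n) => _ h; apply: lt_trans ne.
Qed.

Lemma met_fan : metrizable_space T R -> countable_fan_tightness T.
Proof.
move=> /met_sft sft z A Az; have [a [Aa ca]] := sft z A Az.
exists (fun n => [set a n]); split.
  by move=> n; split; [apply: finite_set1|move=> y ->].
move=> U Uz; have [y [[n _ <-] Uy]] := ca U Uz.
by exists (a n); split => //; exists n.
Qed.

Lemma met_fu : metrizable_space T R -> frechet_urysohn T.
Proof.
move=> [d [d0 dP dS dT dN]] A z Az.
have ex n : exists a, A a /\ d z a < n.+1%:R^-1.
  have [|a [Aa Ba]] := Az [set y | d z y < n.+1%:R^-1].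
    by rewrite dN; exists n.+1%:R^-1 => //=; rewrite invr_gt0 ltr0Sn.
  by exists a.
have [a Ha] := choice ex.
exists a; split; first by move=> n; case: (Ha n).
move=> U; rewrite dN => -[e /= e0 sub]; have [N Ne] := inv_nat_lt e0.
exists N => // n /= Nn; apply: sub => /=; case: (Ha n) => _ h.
apply: (lt_le_trans h); apply: le_trans (ltW Ne); exact: inv_nat_le.
Qed.

End TopImpl.

End PartA.
Import PartA.

Module PartB.

Lemma initial_cvgP (S : choiceType) (T : topologicalType) (f : S -> T)
  (G : set_system S) (s : S) :
  Filter G -> (G --> (s : initial_topology f)) <-> (f @ G --> f s).
Proof.
move=> FG; split.
- move=> Gs A; rewrite nbhsE => -[C [oC Cfs] CA].
  apply: (@filterS _ _ FG (f @^-1` C)); first by move=> y /CA.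
  apply: Gs; rewrite nbhsE; exists (f @^-1` C) => //; split => //.
  by exists C.
- move=> Gs A; rewrite nbhsE => -[B [[C oC <-] Bs] BA].
  apply: (@filterS _ _ FG _ _ BA); apply: Gs.
  by apply: open_nbhs_nbhs; split.
Qed.

Section Ptws.
Variables (X Y : topologicalType).

Lemma ptws_cvgP (G : set_system (X -> Y)) (f : X -> Y) :
  Filter G -> (G --> (f : {ptws X -> Y})) <-> (forall x, (fun g => g x) @ G --> f x).
Proof.
move=> FG; rewrite /= cvg_sup; split => H x; move: (H x).
  by move/(@initial_cvgP _ _ (fun g : X -> Y => g x) G f FG).
by move=> /(@initial_cvgP _ _ (fun g : X -> Y => g x) G f FG).
Qed.

Definition QpE := Qp.

Lemma qp_cvgP (G : set_system (Qp X Y)) (z : Qp X Y) :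
  Filter G -> (G --> z) <-> ((fun q : Qp X Y => (val q : {ptws X -> Y})) @ G --> (val z : {ptws X -> Y})).
Proof.
move=> FG; exact: (@initial_cvgP _ _ (@set_val _ _) G z FG).
Qed.

End Ptws.

Section Qp2.
Variables (X Y : topologicalType).

Lemma qp_cvg_ptwsP (G : set_system (Qp X Y)) (z : Qp X Y) :
  Filter G -> (G --> z) <-> (forall x, (fun q : Qp X Y => (val q : X -> Y) x) @ G --> (val z : X -> Y) x).
Proof.
move=> FG; rewrite qp_cvgP ptws_cvgP; split => H x; exact: (H x).
Qed.

Lemma qp_eval_nbhs (z : Qp X Y) x (V : set Y) :
  nbhs ((val z : X -> Y) x) V -> nbhs z [set g : Qp X Y | V ((val g : X -> Y) x)].
Proof.
move=> zV; have := (@qp_cvg_ptwsP (nbhs z) z _).1 (@cvg_id _ _) x V zV.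
move=> h; exact: h.
Qed.

Definition qpfil (z : Qp X Y) : set_system (Qp X Y) :=
  [set N | exists (F : seq X) (W : X -> set Y),
     (forall x, x \in F -> nbhs ((val z : X -> Y) x) (W x)) /\
     [set g : Qp X Y | forall x, x \in F -> W x ((val g : X -> Y) x)] `<=` N].

Lemma qpfil_filter z : Filter (qpfil z).
Proof.
constructor.
- by exists [::], (fun _ => setT); split => //.
- move=> A B [F1 [W1 [H1 S1]]] [F2 [W2 [H2 S2]]].
  exists (F1 ++ F2), (fun x => (if x \in F1 then W1 x else setT) `&` (if x \in F2 then W2 x else setT)).
  split.
    move=> x _; apply: filterI.
      case: (x \in F1) / boolP => xF; [exact: H1|exact: filterT].
    case: (x \in F2) / boolP => xF; [exact: H2|exact: filterT].
  move=> g Hg; split.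
    by apply: S1 => x xF; have := Hg x; rewrite mem_cat xF /= => /(_ isT) [].
  by apply: S2 => x xF; have := Hg x; rewrite mem_cat xF orbT /= => /(_ isT) [_].
- move=> P Q PQ [F [W [H S]]]; exists F, W; split => //; by move=> g /S /PQ.
Qed.

Lemma qp_nbhs_fin (z : Qp X Y) (N : set (Qp X Y)) :
  nbhs z N -> qpfil z N.
Proof.
have FG := qpfil_filter z.
suff : qpfil z --> z by apply.
apply/(qp_cvg_ptwsP z FG) => x V zV.
exists [:: x], (fun _ => V); split; first by move=> y; rewrite inE => /eqP ->.
by move=> g /(_ x); rewrite inE eqxx; apply.
Qed.

Lemma qp_nbhs_agree (z : Qp X Y) (N : set (Qp X Y)) :
  nbhs z N -> exists F : seq X, forall g : Qp X Y,
     (forall x, x \in F -> (val g : X -> Y) x = (val z : X -> Y) x) -> N g.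
Proof.
move=> /qp_nbhs_fin [F [W [H S]]]; exists F => g Hg; apply: S => x xF.
by rewrite Hg //; apply: nbhs_singleton; apply: H.
Qed.

End Qp2.

End PartB.
Import PartB.

Module PartC.

Lemma metric_metrizable (R : realType) (Y : metricType R) : metrizable_space Y R.
Proof.
exists (@mdist R Y); split.
- exact: mdist_ge0.
- by move=> x y; split => [/mdist_positivity //|->]; exact: mdistxx.
- exact: metric_sym.
- exact: metric_triangle.
- move=> x; rewrite predeqE => A; rewrite nbhs_ballP; split.
    by move=> [e /= e0 sub]; exists e => //; rewrite -ballEmdist.
  by move=> [e /= e0 sub]; exists e => //; rewrite ballEmdist.
Qed.

Lemma bool_metrizable (R : realType) : metrizable_space bool R.
Proof.
exists (fun a b : bool => if a == b then 0 else 1 : R); split.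
- by move=> x y; case: eqP.
- by move=> x y; split; case: eqP => // _ /eqP; rewrite oner_eq0.
- by move=> x y; rewrite eq_sym.
- by case; case; case => /=; lra.
- move=> x; rewrite predeqE => A; split.
    move=> /principal_filterP Ax; exists 1 => //= y.
    by rewrite /=; case: (x =P y) => [<-//|_]; rewrite ltxx.
  move=> [e /= e0 sub]; apply/principal_filterP; apply: sub => /=.
  by rewrite eqxx.
Qed.

Lemma seq_min_pos (R : realType) (T : eqType) (F : seq T) (rho : T -> R) :
  (forall x, x \in F -> 0 < rho x) ->
  exists2 e, 0 < e & forall x, x \in F -> e <= rho x.
Proof.
elim: F => [|a F IH] H; first by exists 1.
have [|e e0 He] := IH; first by move=> x xF; apply: H; rewrite inE xF orbT.
have a0 : 0 < rho a by apply: H; rewrite inE eqxx.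
exists (Num.min (rho a) e); first by rewrite lt_min a0 e0.
move=> x; rewrite inE => /orP[/eqP->|xF]; first by rewrite ge_min lexx.
by rewrite ge_min He // orbT.
Qed.

Lemma min_tri (R : realType) (a b c e : R) : 0 <= a -> 0 <= c -> 0 <= e -> b <= c + e ->
  Num.min a b <= Num.min a c + Num.min a e.
Proof.
move=> a0 c0 e0 bce; rewrite !minEle.
case: (leP a b) => ab; case: (leP a c) => ac; case: (leP a e) => ae; lra.
Qed.

Lemma min_lt_lemma (R : realType) (w d r : R) : Num.min w d < Num.min r w -> d < r.
Proof. rewrite !minEle; case: (leP w d); case: (leP r w); lra. Qed.

Section QpMetric.
Variables (R : realType) (X Y : topologicalType) (dY : Y -> Y -> R).
Hypotheses (d0 : forall x y, 0 <= dY x y) (dP : forall x y, dY x y = 0 <-> x = y)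
  (dS : forall x y, dY x y = dY y x) (dT : forall x y z, dY x z <= dY x y + dY y z)
  (dN : forall y : Y, nbhs y = filter_from [set e : R | 0 < e] (fun e => [set z | dY y z < e])).
Variable e : nat -> X.
Hypothesis esurj : forall x, exists n, e n = x.

Let tt n (f g : Qp X Y) := Num.min (n.+1%:R^-1) (dY ((val f : X -> Y) (e n)) ((val g : X -> Y) (e n))).
Let Dq f g := sup (range (fun n => tt n f g)).

Let w_gt0 n : 0 < n.+1%:R^-1 :> R.
Proof. by rewrite invr_gt0 ltr0Sn. Qed.

Let tt_ge0 n f g : 0 <= tt n f g.
Proof. by rewrite le_min (ltW (w_gt0 n)) d0. Qed.

Let tt_lew n f g : tt n f g <= n.+1%:R^-1.
Proof. by rewrite ge_min lexx. Qed.

Let tt_led n f g : tt n f g <= dY ((val f : X -> Y) (e n)) ((val g : X -> Y) (e n)).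
Proof. by rewrite ge_min lexx orbT. Qed.

Let rng_ub f g : has_ubound (range (fun n => tt n f g)).
Proof.
exists 1 => _ [n _ <-]; apply: le_trans (tt_lew n f g) _.
by rewrite invf_le1 ?ltr0Sn // ler1n.
Qed.

Let tt_leD n f g : tt n f g <= Dq f g.
Proof. by apply: (ub_le_sup (rng_ub f g)); exists n. Qed.

Let D_le f g r : (forall n, tt n f g <= r) -> Dq f g <= r.
Proof.
move=> H; apply: ge_sup; first by exists (tt 0 f g), 0%N.
by move=> _ [n _ <-].
Qed.

Lemma qp_metrizable : metrizable_space (Qp X Y) R.
Proof.
exists Dq; split.
- by move=> f g; apply: le_trans (tt_leD 0 f g); exact: tt_ge0.
- move=> f g; split; last first.
    move=> ->; apply/eqP; rewrite eq_le; apply/andP; split.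
      by apply: D_le => n; rewrite /tt (proj2 (dP _ _) erefl) minEle; case: ifP.
    by apply: le_trans (tt_leD 0 g g); exact: tt_ge0.
  move=> D0; apply: val_inj; apply/funext => x; have [n <-] := esurj x.
  have : tt n f g = 0.
    by apply/eqP; rewrite eq_le tt_ge0 andbT -D0 tt_leD.
  rewrite /tt minEle; case: ifP => [_ /eqP|_ /dP //].
  by rewrite (gt_eqF (w_gt0 n)).
- by move=> f g; rewrite /Dq; congr sup; apply/funext => r;
    apply/propext; split => -[n _ <-]; exists n => //; rewrite /tt dS.
- move=> f g h; apply: D_le => n.
  apply: le_trans (lerD (tt_leD n f g) (tt_leD n g h)).
  by apply: min_tri; [exact: ltW|exact: d0|exact: d0|exact: dT].
- move=> f; rewrite predeqE => N; split.
  + move=> /qp_nbhs_fin [F [W [HW S]]].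
    have ex x : exists p : R * nat, [/\ 0 < p.1, e p.2 = x &
        (x \in F -> [set y | dY ((val f : X -> Y) x) y < p.1] `<=` W x)].
      have [n en] := esurj x.
      case: (boolP (x \in F)) => xF.
        have := HW x xF; rewrite dN => -[r /= r0 sub].
        by exists (r, n); split.
      by exists (1, n); split.
    have [p Hp] := choice ex.
    have [eps eps0 Heps] := @seq_min_pos R X F (fun x => Num.min (p x).1 ((p x).2.+1%:R^-1))
      (fun x _ => ltac:(case: (Hp x) => h _ _; by rewrite lt_min h w_gt0)).
    exists eps => // g /= Dg; apply: S => x xF.
    case: (Hp x) => _ en Hsub; apply: Hsub => //=.
    have := Heps x xF; move: (tt_leD (p x).2 f g); rewrite /tt en => h1 h2.
    apply: (@min_lt_lemma R ((p x).2.+1%:R^-1) _ (p x).1).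
    by apply: le_lt_trans h1 _; apply: lt_le_trans Dg h2.
  + move=> [eps /= eps0 sub].
    have eps20 : 0 < eps / 2 by rewrite divr_gt0.
    have [M HM] := inv_nat_lt eps20.
    have Hk k : nbhs f [set g : Qp X Y | forall n, (n < k)%N ->
        dY ((val f : X -> Y) (e n)) ((val g : X -> Y) (e n)) < eps / 2].
      elim: k => [|k IH].
        by apply: filterS filterT => g _ n.
      have Vk : nbhs f [set g : Qp X Y | dY ((val f : X -> Y) (e k)) ((val g : X -> Y) (e k)) < eps / 2].
        apply: (@qp_eval_nbhs X Y f (e k) [set y | dY ((val f : X -> Y) (e k)) y < eps / 2]).
        by rewrite dN; exists (eps / 2).
      apply: filterS (filterI IH Vk) => g [H1 H2] n; rewrite ltnS leq_eqVlt.
      by case/orP => [/eqP ->//|/H1].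
    apply: filterS (Hk M.+1) => g Hg; apply: sub => /=.
    apply: (le_lt_trans (_ : _ <= eps / 2)); last by rewrite ltr_pdivrMr // ltr_pMr // ltr1n.
    apply: D_le => n; case: (leqP n M) => nM.
      by apply: le_trans (tt_led n f g) _; apply/ltW/Hg; rewrite ltnS.
    apply: le_trans (tt_lew n f g) _; apply: ltW; apply: le_lt_trans HM.
    by apply: inv_nat_le; apply: ltnW.
Qed.

End QpMetric.

Lemma countable_qp_metrizable (R : realType) (X Y : topologicalType) (x0 : X) :
  countable [set: X] -> metrizable_space Y R -> metrizable_space (Qp X Y) R.
Proof.
move=> /countable_injP [f finj] [dY [d0 dP dS dT dN]].
pose e n := xget x0 [set x | f x = n].
apply: (@qp_metrizable R X Y dY d0 dP dS dT dN e) => x.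
exists (f x); apply: finj; rewrite ?inE //.
by apply: (@xgetI X x0 [set y | f y = f x] x).
Qed.

End PartC.
Import PartC.

Module PartD.

Section Neg.
Variables (X Y : topologicalType) (y0 y1 : Y) (O0 O1 : set Y).
Hypotheses (oO0 : open O0) (oO1 : open O1) (O0y : O0 y0) (O1y : O1 y1)
  (O01 : O0 `&` O1 = set0).

Definition mq (f : X -> Y) (H : quasicontinuous f) : Qp X Y :=
  @exist _ _ (f : {ptws X -> Y}) (mem_set H).

Lemma not_tight (z : X -> Y) (hz : quasicontinuous z) (h : set X -> X -> Y)
  (hq : forall G, finite_set G -> quasicontinuous (h G)) (S : set X) :
  ~ countable S ->
  (forall F : seq X, exists G, finite_set G /\ forall x, x \in F -> h G x = z x) ->
  (forall s, S s -> exists V, [/\ open V, V (z s) &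
      forall G, finite_set G -> ~ G s -> ~ V (h G s)]) ->
  ~ countable_tightness (Qp X Y).
Proof.
move=> nS Hi Hii ct.
pose zq := mq hz.
pose A := [set q : Qp X Y | exists G, finite_set G /\ (val q : X -> Y) = h G].
have clA : closure A zq.
  move=> N /qp_nbhs_agree [F HF]; have [G [fG HG]] := Hi F.
  exists (mq (hq G fG)); split; first by exists G.
  by apply: HF => x xF; apply: HG.
have [B [BA cB clB]] := ct A zq clA.
have ex q : exists G, B q -> finite_set G /\ (val q : X -> Y) = h G.
  case: (pselect (B q)) => Bq; last by exists set0.
  by have [G HG] := BA q Bq; exists G.
have [Gq HGq] := choice ex.
pose U := \bigcup_(q in B) Gq q.
have cU : countable U.
  apply: bigcup_countable => // q Bq; apply: finite_set_countable.
  by case: (HGq q Bq).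
have [s [Ss nUs]] : exists s, S s /\ ~ U s.
  apply/not_existsP => H; apply: nS; apply: sub_countable cU.
  apply: subset_card_le => s Ss; move: (H s) => /not_andP [//|/contrapT //].
have [V [oV Vz HV]] := Hii s Ss.
have nV : nbhs zq [set g : Qp X Y | V ((val g : X -> Y) s)].
  by apply: qp_eval_nbhs; apply: open_nbhs_nbhs; split.
have [q [Bq Vq]] := clB _ nV.
case: (HGq q Bq) => fG eq; apply: (HV (Gq q) fG); last by rewrite -eq.
by move=> Gs; apply: nUs; exists q.
Qed.

Definition tv (P : set X) (x : X) : Y := if `[< P x >] then y1 else y0.

Lemma tv_qc (P : set X) :
  (forall x N, open N -> N x -> exists W, [/\ open W, W !=set0, W `<=` N &
      forall w, W w -> (P w <-> P x)]) -> quasicontinuous (tv P).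
Proof.
move=> H x V N oV Vx oN Nx; have [W [oW W0 WN WP]] := H x N oN Nx.
exists W; split => // _ [w Ww <-]; rewrite /tv.
by rewrite (propext (WP w Ww)).
Qed.

Lemma open_not_closure (O1' O2 : set X) (w : X) : open O1' -> O1' `&` O2 = set0 ->
  O1' w -> ~ closure O2 w.
Proof.
move=> oO Od Ow cw; have [y [yb ya]] := cw O1' (open_nbhs_nbhs (conj oO Ow)).
by have : (O1' `&` O2) y by []; rewrite Od.
Qed.

Lemma closure_open_qc (O : set X) : open O -> quasicontinuous (tv (closure O)).
Proof.
move=> oO; apply: tv_qc => x N oN Nx.
case: (pselect (closure O x)) => cx.
  have [y [Oy Ny]] := cx N (open_nbhs_nbhs (conj oN Nx)).
  exists (N `&` O); split; [exact: openI|by exists y|by move=> ? []|].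
  by move=> w [_ Ow]; split => // _; apply: subset_closure.
exists (N `&` ~` closure O); split.
- by apply: openI => //; rewrite openC; exact: closed_closure.
- by exists x.
- by move=> ? [].
- by move=> w [_ nw]; split.
Qed.

Lemma const_qc : quasicontinuous (fun _ : X => y0).
Proof.
move=> x V N oV Vx oN Nx; exists N; split => //; first by exists x.
by move=> _ [w _ <-].
Qed.

Lemma y1_notO0 : ~ O0 y1.
Proof. by move=> h; have : (O0 `&` O1) y1 by []; rewrite O01. Qed.

Lemma y0_notO1 : ~ O1 y0.
Proof. by move=> h; have : (O0 `&` O1) y0 by []; rewrite O01. Qed.

Lemma not_tight_UV (U V : set X) : open U -> open V -> U `&` V = set0 ->
  ~ countable (closure U `&` closure V) -> ~ countable_tightness (Qp X Y).
Proof.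
move=> oU oV UV nS.
have VU : V `&` U = set0 by rewrite setIC.
pose P G x := closure U x /\ (G x \/ ~ closure V x).
apply: (@not_tight (tv (closure U)) (closure_open_qc oU) (fun G => tv (P G)) _
   (closure U `&` closure V) nS).
- move=> G _; apply: tv_qc => x N oN Nx.
  case: (pselect (P G x)) => Px.
    have [y [Uy Ny]] := Px.1 N (open_nbhs_nbhs (conj oN Nx)).
    exists (N `&` U); split; [exact: openI|by exists y|by move=> ? []|].
    move=> w [_ Uw]; split => // _; split; first exact: subset_closure.
    by right; apply: (open_not_closure oU UV).
  case: (pselect (closure U x)) => cUx.
    have cVx : closure V x by apply: contrapT => nc; apply: Px; split => //; right.
    have [y [Vy Ny]] := cVx N (open_nbhs_nbhs (conj oN Nx)).
    exists (N `&` V); split; [exact: openI|by exists y|by move=> ? []|].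
    move=> w [_ Vw]; split => // -[cUw _].
    by case: (open_not_closure oV VU Vw cUw).
  exists (N `&` ~` closure U); split.
  + by apply: openI => //; rewrite openC; exact: closed_closure.
  + by exists x.
  + by move=> ? [].
  + by move=> w [_ nw]; split => // -[].
- move=> F; exists [set` F]; split; first exact: finite_seq.
  move=> x xF; rewrite /tv; congr (if _ then _ else _).
  by apply/asboolP/asboolP => [[]//|cx]; split => //; left.
- move=> s [cUs cVs]; exists O1; split => //.
    by rewrite /tv asboolT.
  move=> G _ nGs; rewrite /tv asboolF; first exact: y0_notO1.
  by move=> [_ [//|]].
Qed.

End Neg.

End PartD.
Import PartD.

Module PartE.

Section MetricLemmas.
Variables (R : realType) (X : metricType R).

Lemma mball_open (x : X) (r : R) : open [set y | mdist x y < r].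
Proof.
rewrite openE => y /= hy; apply/nbhs_ballP; exists (r - mdist x y) => /=.
  by rewrite subr_gt0.
move=> z; rewrite ballEmdist /= => hz.
have := metric_triangle x y z; lra.
Qed.

Lemma mball_nbhs (x : X) (r : R) : 0 < r -> nbhs x [set y | mdist x y < r].
Proof.
move=> r0; apply: open_nbhs_nbhs; split; first exact: mball_open.
by rewrite /= mdistxx.
Qed.

Lemma mnbhsP (x : X) (N : set X) : nbhs x N <-> exists2 r, 0 < r & [set y | mdist x y < r] `<=` N.
Proof.
rewrite nbhs_ballP; split => -[r /= r0 sub]; exists r => //.
  by rewrite -ballEmdist.
by rewrite ballEmdist.
Qed.

End MetricLemmas.

Lemma not_tight_sep (R : realType) (X : metricType R) (Y : topologicalType)
  (y0 y1 : Y) (O0 O1 : set Y) :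
  open O0 -> open O1 -> O0 y0 -> O1 y1 -> O0 `&` O1 = set0 ->
  forall (eps : R) (S : set X), 0 < eps -> ~ countable S ->
  (forall a b, S a -> S b -> a <> b -> eps <= mdist a b) ->
  ~ countable_tightness (Qp X Y).
Proof.
move=> oO0 oO1 O0y O1y O01 eps S eps0 nS Ssep.
pose UG G := \bigcup_(e in S `\` G) [set y : X | mdist e y < eps / 3].
have oUG G : open (UG G) by apply: bigcup_open => e _; exact: mball_open.
apply: (@not_tight X Y (fun _ => y0) (@const_qc X Y y0)
  (fun G => tv y0 y1 (closure (UG G))) (fun G _ => @closure_open_qc X Y y0 y1 _ (oUG G)) S nS).
- move=> F.
  pose phi x := xget x [set e | S e /\ mdist x e < eps / 2].
  exists [set e | S e /\ exists x, x \in F /\ mdist x e < eps / 2]; split.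
    apply: (@sub_finite_set _ _ (phi @` [set` F])); last first.
      by apply: finite_image; exact: finite_seq.
    move=> e [Se [x [xF xe]]]; exists x => //.
    have [Sp xp] : S (phi x) /\ mdist x (phi x) < eps / 2.
      by apply: (@xgetI X x [set e | S e /\ mdist x e < eps / 2] e).
    apply: contrapT => ne; have := Ssep _ _ Sp Se ne.
    have := metric_triangle (phi x) x e; rewrite (metric_sym (phi x) x); lra.
  move=> x xF; rewrite /tv asboolF // => cx.
  have e6 : 0 < eps / 6 by rewrite divr_gt0.
  have [y [[e [Se nGe] ey] xy]] := cx _ (mball_nbhs x e6).
  apply: nGe; split => //; exists x; split => //.
  move: ey xy => /= ey xy.
  have := metric_triangle x y e; rewrite (metric_sym e y) in ey; lra.
- move=> s Ss; exists O0; split => // G _ nGs.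
  rewrite /tv asboolT; first exact: y1_notO0 O1y O01.
  apply: subset_closure; exists s; first by split.
  by rewrite /= mdistxx divr_gt0.
Qed.

End PartE.
Import PartE.

Module PartF1.
Local Open Scope card_scope.

Lemma card_le_of_inj (T U : Type) (A : set T) (B : set U) (f : T -> U) :
  set_fun A B f -> set_inj A f -> A #<= B.
Proof.
move=> fAB finj; have := inj_card_eq finj; rewrite card_eq_le => /andP[_ h].
apply: card_le_trans h _; apply: subset_card_le => _ [a Aa <-]; exact: fAB.
Qed.

Lemma card_le_fun (T U : Type) (A : set T) (B : set U) (a : T) :
  A a -> A #<= B -> exists f : T -> U, set_fun A B f /\ set_inj A f.
Proof.
move=> Aa /card_leP [g].
pose F t := match pselect (A t) with
  | left H => val (g (@exist _ _ t (mem_set H)))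
  | right _ => val (g (@exist _ _ a (mem_set Aa))) end.
exists F; split.
  move=> t At; rewrite /F; case: pselect => // H; exact: set_valP.
move=> t t' /set_mem At /set_mem At'; rewrite /F.
case: pselect => // H; case: pselect => // H' /val_inj eq.
have := @inj _ _ _ g _ _ (mem_set I) (mem_set I) eq.
by move=> /(congr1 val).
Qed.

Lemma pick_Z (T : Type) (X' : set T) (code : T -> (nat -> bool)) :
  NotCH -> set_inj X' code -> ~ countable X' ->
  exists Z, [/\ Z `<=` X', ~ countable Z & card_lt_continuum Z].
Proof.
move=> [A [nA nCA]] cinj nX.
case: (pselect (continuum_set #<= X')) => cX.
  have [j [jf jinj]] := @card_le_fun _ _ _ _ (fun _ => false) I cX.
  have jinjA : set_inj A j by move=> x y _ _; apply: jinj; rewrite inE.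
  have ZA : j @` A #<= A by exact: card_image_le.
  exists (j @` A); split.
  - by move=> _ [a _ <-]; apply: jf.
  - move=> cZ; apply: nA; apply: sub_countable cZ.
    by apply: (@card_le_of_inj _ _ _ _ j) => // a Aa; exists a.
  - split; first by apply: card_le_trans ZA _; exact: subset_card_le.
    by move=> h; apply: nCA; apply: card_le_trans h ZA.
exists X'; split => //; split => //.
by apply: (@card_le_of_inj _ _ _ _ code).
Qed.

Lemma lt_cont_setT (T : Type) (Z : set T) :
  card_lt_continuum Z -> card_lt_continuum [set: set_type Z].
Proof.
move=> [h1 h2]; split; first by rewrite (card_le_eql (card_setT Z)).
by rewrite (card_le_eqr (card_setT Z)).
Qed.

Lemma surj_from_uncountable (T : Type) (Z : set T) (K : countType) (k0 : K) :
  ~ countable Z -> exists psi : T -> K, forall t : K, exists z, Z z /\ psi z = t.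
Proof.
move=> nZ.
have iZ : infinite_set Z by move=> /finite_set_countable.
have /infiniteP/pcard_surjP [g gs] := iZ.
exists (fun z => odflt k0 (choice.unpickle (g z))) => t.
have [z Zz gz] := gs (choice.pickle t) I.
by exists z; split => //; rewrite gz choice.pickleK.
Qed.

End PartF1.
Import PartF1.

Module PartF2.
Import finmap.

Lemma nbhs_seq_all (T : topologicalType) (I : eqType) (L : seq I) (Q : I -> set T) (x : T) :
  (forall t, t \in L -> nbhs x (Q t)) -> nbhs x [set y | forall t, t \in L -> Q t y].
Proof.
elim: L => [|a L IH] H.
  by apply: filterS filterT => y _ t.
have h1 : nbhs x (Q a) by apply: H; rewrite inE eqxx.
have h2 := IH (fun t tL => H t (ltac:(by rewrite inE tL orbT))).
apply: filterS (filterI h1 h2) => y [Qa HL] t; rewrite inE => /orP[/eqP->//|tL].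
exact: HL.
Qed.

Section Forcing.
Variables (R : realType) (X : metricType R).
Variable b : nat * nat -> set X.
Hypotheses (bo : forall m, open (b m))
  (bb : forall x W, open W -> W x -> exists m, b m x /\ closure (b m) `<=` W).
Variable Z : set X.
Hypothesis Zinf : forall z, Z z -> forall N, nbhs z N -> infinite_set N.

Definition T3 := (nat * (nat * nat) * bool)%type.
Definition cond := ({fset T3} * {fset (X * nat)})%type.
Definition valid (p : cond) : Prop :=
  [/\ (forall n m m' c, (n, m, c) \in p.1 -> (n, m', ~~ c) \in p.1 -> b m `&` b m' = set0),
      (forall z n m c, (z, n) \in p.2 -> (n, m, c) \in p.1 -> ~ closure (b m) z) &
      (forall z n, (z, n) \in p.2 -> Z z)].
Definition Pt := {p : cond | valid p}.
Definition ple (q p : Pt) : Prop :=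
  fsubset (sval p).1 (sval q).1 /\ fsubset (sval p).2 (sval q).2.

Lemma ple_po : partial_order ple.
Proof.
split; first by move=> p; split; exact: fsubset_refl.
split.
  move=> p q r [h1 h2] [h3 h4]; split; [exact: fsubset_trans h3 h1|exact: fsubset_trans h4 h2].
move=> [[s1 F1] v1] [[s2 F2] v2] [/= h1 h2] [/= h3 h4]; apply: eq_exist.
have -> : s1 = s2 by apply/eqP; rewrite eqEfsubset h1 h3.
have -> // : F1 = F2 by apply/eqP; rewrite eqEfsubset h2 h4.
Qed.

Lemma valid0 : valid (fset0, fset0).
Proof. by split => //= *; rewrite in_fset0 in H. Qed.

Lemma Pt_inh : inhabited Pt.
Proof. exact: (inhabits (exist _ _ valid0)). Qed.

Lemma valid_join (p q : Pt) : (sval p).1 = (sval q).1 ->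
  valid ((sval p).1, ((sval p).2 `|` (sval q).2)%fset).
Proof.
case: p => [[s F1] [v1 v2 v3]]; case: q => [[s' F2] [w1 w2 w3]] /= ss; subst s'.
split => //=.
- move=> z n m c; rewrite in_fsetU => /orP[h|h]; [exact: v2 h|exact: w2 h].
- move=> z n; rewrite in_fsetU => /orP[h|h]; [exact: v3 h|exact: w3 h].
Qed.

Lemma Pt_ccc : ccc ple.
Proof.
move=> A Aanti; apply/countable_injP.
exists (fun p : Pt => choice.pickle (sval p).1) => p q /set_mem Ap /set_mem Aq.
move=> /(pcan_inj (@choice.pickleK _)) eq1.
apply: contrapT => pq; apply: (Aanti p q Ap Aq pq).
exists (exist _ _ (valid_join eq1)); split; split => //=.
- exact: fsubsetUl.
- by rewrite eq1; exact: fsubset_refl.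
- exact: fsubsetUr.
Qed.


Definition Eset (z : X) : set Pt := [set p | exists n, (z, n) \in (sval p).2].
Definition Dset (t : T3) : set Pt :=
  [set p | (exists m, (t.1.1, m, t.2) \in (sval p).1 /\ (b m `&` b t.1.2) !=set0) \/
           (forall x, b t.1.2 x -> exists m, (t.1.1, m, ~~ t.2) \in (sval p).1 /\ closure (b m) x)].

Lemma Eset_up z p q : Eset z p -> ple q p -> Eset z q.
Proof. by move=> [n h] [_ /fsubsetP sub]; exists n; apply: sub. Qed.

Lemma Dset_up t p q : Dset t p -> ple q p -> Dset t q.
Proof.
move=> [[m [h1 h2]]|h] [/fsubsetP sub _].
  by left; exists m; split => //; apply: sub.
by right => x /h [m [h1 h2]]; exists m; split => //; apply: sub.
Qed.

Lemma Eset_dense z : Z z -> forall p, exists2 q, Eset z q & ple q p.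
Proof.
move=> Zz [[s F] [v1 v2 v3]].
have fin : finite_set [set t.1.1 | t in [set` s]] by apply: finite_image; exact: finite_fset.
have [n nn] : exists n, ~ [set t.1.1 | t in [set` s]] n.
  apply/not_existsP => H; apply: infinite_nat; apply: sub_finite_set fin.
  by move=> n _; apply: contrapT; apply: H.
have vq : valid (s, (F `|` [fset (z, n)])%fset).
  split => //=.
  - move=> z' n' m c; rewrite in_fsetU in_fset1 => /orP[h|/eqP[-> ->] h].
      exact: v2 h.
    by case: nn; exists (n, m, c).
  - by move=> z' n'; rewrite in_fsetU in_fset1 => /orP[h|/eqP[-> _]]; [exact: v3 h|].
exists (exist _ _ vq); first by exists n; rewrite /= in_fsetU in_fset1 eqxx orbT.
by split => /=; [exact: fsubset_refl|exact: fsubsetUl].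
Qed.

Lemma Dset_dense t p : exists2 q, Dset t q & ple q p.
Proof.
move: t p => [[n k] c] [[s F] [v1 v2 v3]].
case: (pselect (forall x, b k x -> exists m, (n, m, ~~ c) \in s /\ closure (b m) x)) => H.
  by exists (@exist _ valid (s, F) (And3 v1 v2 v3)); [right|split; exact: fsubset_refl].
have [x [bkx Hx]] : exists x, b k x /\ forall m, (n, m, ~~ c) \in s -> ~ closure (b m) x.
  apply: contrapT => H'; apply: H => x bx; apply: contrapT => H2; apply: H'.
  exists x; split => // m ms cm; apply: H2; by exists m.
pose Wx := [set y | b k y /\ forall t, t \in s -> t.1.1 = n -> t.2 = ~~ c -> ~ closure (b t.1.2) y].
have nWx : nbhs x Wx.
  apply: filterI; first by apply: open_nbhs_nbhs; split.
  apply: (@nbhs_seq_all X _ (enum_fset s) (fun t => [set y | t.1.1 = n -> t.2 = ~~ c -> ~ closure (b t.1.2) y])).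
  move=> [[n' m'] c'] ts /=.
  case: (pselect (n' = n /\ c' = ~~ c)) => [[en ec]|ne].
    subst n' c'; apply: filterS (_ : nbhs x (~` closure (b m'))).
      by move=> y ny _ _.
    apply: open_nbhs_nbhs; split; last by apply: Hx.
    by rewrite openC; exact: closed_closure.
  by apply: filterS filterT => y _ en ec; case: ne.
have [W0 [oW0 W0x] W0W] : exists2 W0, open_nbhs x W0 & W0 `<=` Wx.
  by move: nWx; rewrite nbhsE.
pose Fz := [set t.1 | t in [set` F]].
have fFz : finite_set Fz by apply: finite_image; exact: finite_fset.
have [y [W0y nFy]] : exists y, W0 y /\ ~ Fz y.
  apply: contrapT => H'.
  have W0F : W0 `<=` Fz by move=> y W0y; apply: contrapT => nF; apply: H'; exists y.
  have [[x' n'] xF /= ex] := W0F x W0x; subst x'.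
  have Zx : Z x by apply: (v3 x n').
  apply: (Zinf Zx (open_nbhs_nbhs (conj oW0 W0x))).
  exact: sub_finite_set W0F fFz.
have [r1 r10 sr1] : exists2 r1, 0 < r1 & [set w | mdist y w < r1] `<=` W0.
  by apply/mnbhsP; apply: open_nbhs_nbhs.
have [r2 r20 Hr2] := @seq_min_pos R X [seq t.1 | t <- enum_fset F] (fun z => mdist y z)
  (fun z zF => ltac:(rewrite mdist_gt0; apply/eqP => yz;
     move/mapP: zF => [[z' n'] tF /= ez]; apply: nFy; rewrite yz ez; by exists (z', n'))).
pose rho := Num.min r1 r2.
have yrho : mdist y y < rho by rewrite mdistxx lt_min r10 r20.
have [m' [bm'y cm']] := bb (@mball_open R X y rho) yrho.
have cm'W : closure (b m') `<=` Wx.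
  move=> w /cm' /= h; apply: W0W; apply: sr1 => /=.
  by apply: lt_le_trans h _; rewrite ge_min lexx.
have bm'W : b m' `<=` Wx by move=> w /subset_closure; apply: cm'W.
have disj m2 : (n, m2, ~~ c) \in s -> b m' `&` b m2 = set0.
  move=> m2s; apply/seteqP; split => // w [bw bw2].
  have [_ H2] := bm'W w bw.
  by case: (H2 (n, m2, ~~ c) m2s erefl erefl); apply: subset_closure.
have vq : valid ((s `|` [fset (n, m', c)])%fset, F).
  split => /=.
  - move=> n1 m1 m2 c1; rewrite !in_fsetU !in_fset1.
    move=> /orP[h1|/eqP[e1 e2 e3]] /orP[h2|/eqP[f1 f2 f3]].
    + exact: v1 h1 h2.
    + subst n1 m2; have ec : c1 = ~~ c by rewrite -f3 negbK.
      subst c1; rewrite setIC; exact: disj.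
    + subst n1 m1 c1; exact: disj.
    + by move: f3; rewrite e3; case: (c).
  - move=> z n1 m1 c1 zF; rewrite in_fsetU in_fset1 => /orP[h|/eqP[e1 e2 e3]].
      exact: v2 zF h.
    subst n1 m1 c1 => /cm' /=; apply/negP; rewrite -leNgt.
    apply: le_trans (_ : r2 <= _); first by rewrite ge_min lexx orbT.
    by apply: Hr2; apply/mapP; exists (z, n) => //.
  - exact: v3.
exists (exist _ _ vq).
  left; exists m'; split; first by rewrite /= in_fsetU in_fset1 eqxx orbT.
  by exists y; split => //; have [] := W0W y W0y.
by split => /=; [exact: fsubsetUl|exact: fsubset_refl].
Qed.

Lemma ED_dense z t : Z z -> dense_set ple (Eset z `&` Dset t).
Proof.
move=> Zz p; have [q1 Dq1 q1p] := Dset_dense t p.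
have [q2 Eq2 q2q1] := Eset_dense Zz q1.
exists q2; first by split => //; exact: Dset_up Dq1 q2q1.
by have [_ [tr _]] := ple_po; exact: tr q2q1 q1p.
Qed.

Lemma forcing_UV : MartinsAxiom -> card_lt_continuum [set: set_type Z] ->
  forall psi : set_type Z -> T3, (forall t, exists i, psi i = t) -> ~ countable Z ->
  exists U V : set X, [/\ open U, open V, U `&` V = set0 & ~ countable (closure U `&` closure V)].
Proof.
move=> MA cZ psi psis nZ.
have [G [[Gne [Gup Gdir]] GD]] := MA Pt ple Pt_inh ple_po Pt_ccc (set_type Z)
  (fun i => Eset (val i) `&` Dset (psi i)) cZ (fun i => ED_dense (psi i) (set_valP i)).
pose UV n c := \bigcup_(m in [set m | exists p, G p /\ (n, m, c) \in (sval p).1]) b m.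
have oUV n c : open (UV n c) by apply: bigcup_open => m _; exact: bo.
have dUV n : UV n false `&` UV n true = set0.
  apply/seteqP; split => // w [[m [p [Gp mp]] bw] [m' [q [Gq mq]] bw']].
  have [r Gr [rp rq]] := Gdir p q Gp Gq.
  have [v1 _ _] := svalP r.
  have := v1 n m m' false (fsubsetP rp.1 _ mp) (fsubsetP rq.1 _ mq).
  by move=> eq; have : (b m `&` b m') w by []; rewrite eq.
have cUV n c z p : G p -> (z, n) \in (sval p).2 -> closure (UV n c) z.
  move=> Gp zn N; rewrite nbhsE => -[N' [oN' N'z] N'N].
  have [k [bkz ck]] := bb oN' N'z.
  have [i psii] := psis (n, k, c).
  have [q [Gq [_ Dq]]] := GD i; rewrite psii in Dq.
  case: Dq => [[m [mq [w [bmw bkw]]]]|H].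
    exists w; split; first by exists m => //; exists q.
    by apply: N'N; apply: ck; apply: subset_closure.
  have [m [mq cmz]] := H z bkz.
  have [r Gr [rp rq]] := Gdir p q Gp Gq.
  have [_ v2 _] := svalP r.
  by case: (v2 z n m (~~ c) (fsubsetP rp.2 _ zn) (fsubsetP rq.1 _ mq)).
have Zcov : Z `<=` \bigcup_n (closure (UV n false) `&` closure (UV n true)).
  move=> z Zz; have [q [Gq [[n zn] _]]] := GD (@exist _ _ z (mem_set Zz)).
  by exists n => //; split; exact: (cUV n _ z q Gq zn).
have [n nn] : exists n, ~ countable (closure (UV n false) `&` closure (UV n true)).
  apply/not_existsP => H; apply: nZ; apply: sub_countable (subset_card_le Zcov) _.
  apply: bigcup_countable; first exact: countableP.
  by move=> n _; apply: contrapT; exact: H n.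
by exists (UV n false), (UV n true); split.
Qed.

End Forcing.

End PartF2.
Import PartF2.

Module PartG.

Lemma countableU (T : Type) (A B : set T) : countable A -> countable B -> countable (A `|` B).
Proof.
move=> cA cB.
have -> : A `|` B = \bigcup_(i in [set: bool]) (if i then A else B).
  apply/seteqP; split => [x [Ax|Bx]|x [[] _ h]]; by [exists true|exists false|left|right].
by apply: bigcup_countable => // -[].
Qed.

Definition msep (R : realType) (X : metricType R) (d : R) (S : set X) :=
  forall a b, S a -> S b -> a <> b -> d <= mdist a b.

Section Sep.
Variables (R : realType) (X : metricType R).

Lemma maximal_sep (d : R) : 0 < d -> exists M : set X, msep d M /\
  forall x, exists2 m, M m & mdist x m < d.
Proof.
move=> d0.
have [M [sM maxM]] : exists A : set X, msep d A /\ forall B, A `<` B -> ~ msep d B.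
  apply: Zorn_bigcup => F FP tot a b [A FA Aa] [B FB Bb] ab.
  case: (tot A B FA FB) => [AB|BA].
    by apply: (FP B FB) => //; apply: AB.
  by apply: (FP A FA) => //; apply: BA.
exists M; split => // x; apply: contrapT => H.
have nM : ~ M x by move=> Mx; apply: H; exists x => //; rewrite mdistxx.
apply: (maxM (M `|` [set x])).
  split; first by move=> y My; left.
  by move=> h; apply: nM; apply: h; right.
move=> a b [Ma|->] [Mb|->] ab.
- exact: sM.
- by rewrite leNgt; apply/negP => h; apply: H; exists a => //; rewrite metric_sym.
- by rewrite leNgt; apply/negP => h; apply: H; exists b.
- by case: ab.
Qed.

End Sep.

Section Base.
Variables (R : realType) (X : metricType R).

Lemma closure_mball (x : X) (r : R) y : closure [set w | mdist x w < r] y -> mdist x y <= r.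
Proof.
move=> cy; rewrite leNgt; apply/negP => h.
have d0 : 0 < mdist x y - r by rewrite subr_gt0.
have [w [/= xw yw]] := cy _ (mball_nbhs y d0).
have := metric_triangle x w y; rewrite (metric_sym w y); lra.
Qed.

Lemma base_sep (x0 : X) :
  (forall n (S : set X), msep (n.+1%:R^-1) S -> countable S) ->
  exists b : nat * nat -> set X, (forall m, open (b m)) /\
    (forall x W, open W -> W x -> exists m, b m x /\ closure (b m) `<=` W).
Proof.
move=> hyp.
have ex n : exists M : set X, msep (n.+1%:R^-1) M /\ forall x, exists2 m, M m & mdist x m < n.+1%:R^-1.
  by apply: maximal_sep; rewrite invr_gt0 ltr0Sn.
have [M HM] := choice ex.
pose D := \bigcup_n M n.
have cD : countable D.
  by apply: bigcup_countable => // n _; apply: hyp (HM n).1.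
have [f finj] := countable_injP _ cD.
pose e k := xget x0 [set x | D x /\ f x = k].
have he n x : exists i, mdist x (e i) < n.+1%:R^-1.
  have [m Mm xm] := (HM n).2 x; exists (f m).
  have [Dy fy] : D (e (f m)) /\ f (e (f m)) = f m.
    by apply: (@xgetI X x0 [set x | D x /\ f x = f m] m); split => //; exists n.
  have -> : e (f m) = m by apply: finj => //; rewrite inE //; exists n.
  exact: xm.
exists (fun ik => [set y | mdist (e ik.1) y < ik.2.+1%:R^-1]); split.
  by move=> m; exact: mball_open.
move=> x W oW Wx.
have [r r0 sr] : exists2 r, 0 < r & [set y | mdist x y < r] `<=` W.
  by apply/mnbhsP; apply: open_nbhs_nbhs.
have r20 : 0 < r / 2 by rewrite divr_gt0.
have [k kr] := inv_nat_lt r20.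
have [i hi] := he k x.
exists (i, k); split; first by rewrite /= metric_sym.
move=> y /closure_mball /= hy; apply: sr => /=.
apply: (le_lt_trans (metric_triangle x (e i) y)).
apply: (lt_le_trans (ltr_leD hi hy)); move: kr; set dd := k.+1%:R^-1; lra.
Qed.

End Base.

End PartG.
Import PartG.

Module PartH.

Lemma neg_main : MartinsAxiom -> NotCH ->
  forall (R : realType) (X : metricType R) (Y : topologicalType) (y0 y1 : Y) (O0 O1 : set Y),
  open O0 -> open O1 -> O0 y0 -> O1 y1 -> O0 `&` O1 = set0 ->
  ~ countable [set: X] -> ~ countable_tightness (Qp X Y).
Proof.
move=> MA nCH R X Y y0 y1 O0 O1 oO0 oO1 O0y O1y O01 nX.
case: (pselect (exists n (S : set X), msep (n.+1%:R^-1) S /\ ~ countable S)).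
  move=> [n [S [sS nS]]].
  apply: (@not_tight_sep R X Y y0 y1 O0 O1 oO0 oO1 O0y O1y O01 (n.+1%:R^-1) S) => //.
move=> Hc.
have hyp n (S : set X) : msep (n.+1%:R^-1) S -> countable S.
  by move=> sS; apply: contrapT => nS; apply: Hc; exists n, S.
have [x0 _] : exists x0 : X, True.
  by apply: contrapT => H; apply: nX; rewrite (_ : [set: X] = set0) //;
     apply/seteqP; split => // x _; apply: H; exists x.
have [b [bo bb]] := base_sep x0 hyp.
pose Iso := [set x : X | exists N, nbhs x N /\ finite_set N].
have cIso : countable Iso.
  apply: (@sub_countable _ _ _ (\bigcup_(m in [set m | finite_set (b m)]) b m)).
    apply: subset_card_le => x [N [Nx fN]].
    move: Nx; rewrite nbhsE => -[N' [oN' N'x] N'N].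
    have [m [bmx cm]] := bb x N' oN' N'x.
    exists m => //; apply: sub_finite_set fN => y /subset_closure /cm; exact: N'N.
  by apply: bigcup_countable => // m fm; exact: finite_set_countable.
have nX' : ~ countable (~` Iso).
  move=> cX'; apply: nX; rewrite (_ : [set: X] = ~` Iso `|` Iso); first exact: countableU.
  by rewrite setUC setUCr.
pose code (x : X) (n : nat) := `[< b (odflt (0%N, 0%N) (choice.unpickle n)) x >].
have cinj : set_inj (~` Iso) code.
  move=> x y _ _ cxy; apply: contrapT => xy.
  have d0 : 0 < mdist x y by rewrite mdist_gt0; apply/eqP.
  have [m [bmx cm]] := bb x _ (@mball_open R X x (mdist x y)) (ltac:(by rewrite /= mdistxx)).
  have := congr1 (fun f => f (choice.pickle m)) cxy; rewrite /code /= choice.pickleK /=.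
  rewrite asboolT // => /esym /asboolP /subset_closure /cm /=.
  by rewrite ltxx.
have [Z [ZX' nZ cZ]] := pick_Z nCH cinj nX'.
have Zinf z : Z z -> forall N, nbhs z N -> infinite_set N.
  by move=> Zz N Nz fN; apply: (ZX' z Zz); exists N.
have [psi0 psis0] := @surj_from_uncountable X Z _ ((0%N, (0%N, 0%N), false) : T3) nZ.
pose psi (i : set_type Z) := psi0 (val i).
have psis : forall t, exists i, psi i = t.
  move=> t; have [z [Zz pz]] := psis0 t.
  by exists (@exist _ _ z (mem_set Zz)).
have [U [V [oU oV UV nUV]]] := @forcing_UV R X b bo bb Z Zinf MA (lt_cont_setT cZ) psi psis nZ.
exact: (@not_tight_UV X Y y0 y1 O0 O1 oO1 O0y O1y O01 U V oU oV UV nUV).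
Qed.

End PartH.
Import PartH.

Theorem corollary7p3 :
  MartinsAxiom -> NotCH ->
  forall (R : realType) (X Y : metricType R),
    nontrivial X -> nontrivial Y ->
    [<-> countable [set: X];
         metrizable_space (Qp X bool) R;
         frechet_urysohn (Qp X Y);
         first_countable (Qp X Y);
         metrizable_space (Qp X Y) R;
         countable_tightness (Qp X Y);
         countable_fan_tightness (Qp X Y);
         countable_strong_fan_tightness (Qp X Y)].
Proof.
move=> MA nCH R X Y [x0 [x1 _]] [ya [yb yab]].
have d0 : 0 < mdist ya yb by rewrite mdist_gt0; apply/eqP.
have d20 : 0 < mdist ya yb / 2 by rewrite divr_gt0.
have negY : ~ countable [set: X] -> ~ countable_tightness (Qp X Y).
  apply: (@neg_main MA nCH R X Y ya yb [set y | mdist ya y < mdist ya yb / 2]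
            [set y | mdist yb y < mdist ya yb / 2]).
  - exact: mball_open.
  - exact: mball_open.
  - by rewrite /= mdistxx.
  - by rewrite /= mdistxx.
  - apply/seteqP; split => // y [/= h1 h2].
    have := metric_triangle ya y yb; rewrite (metric_sym y yb); move: h1 h2.
    set dd := mdist ya yb; lra.
have negB : ~ countable [set: X] -> ~ countable_tightness (Qp X bool).
  apply: (@neg_main MA nCH R X bool false true [set false] [set true]).
  - exact: discrete_open.
  - exact: discrete_open.
  - by [].
  - by [].
  - by apply/seteqP; split => // y [/= -> ].
have cY : countable_tightness (Qp X Y) -> countable [set: X].
  by move=> h; apply: contrapT => n; exact: negY n h.
have cB : countable_tightness (Qp X bool) -> countable [set: X].
  by move=> h; apply: contrapT => n; exact: negB n h.
have posY : countable [set: X] -> metrizable_space (Qp X Y) R.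
  by move=> c; apply: (countable_qp_metrizable x0 c); exact: metric_metrizable.
have posB : countable [set: X] -> metrizable_space (Qp X bool) R.
  by move=> c; apply: (countable_qp_metrizable x0 c); exact: bool_metrizable.
tfae.
- exact: posB.
- by move=> /met_ft /ft_tight /cB /posY /met_fu.
- by move=> /fu_tight /cY /posY /met_ft.
- by move=> /ft_tight /cY /posY.
- by move=> /met_ft /ft_tight.
- by move=> /cY /posY /met_fan.
- by move=> /fan_tight /cY /posY /met_sft.
- by move=> /sft_tight /cY.
Qed.
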